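(* Let $K$ be a unital commutative ring and let $A$ be a unital $K$-algebra. Then the following are equivalent: (1) $A=A[A,A]A$, i.e. $A$ agrees with its commutator ideal; (2) $A$ is generated by its commutators as a $K$-algebra; (3) there exists $N\in\mathbb{N}$ such that for every $a\in A$ there exist $b_j,c_j,d_j,e_j\in A$, $j=1,\dots,N$, with \[ a=\sum_{j=1}^N [b_j,c_j][d_j,e_j]. \]
   Context: $K$-algebras are associative. For $x,y\in A$, $[x,y]=xy-yx$. $[A,A]$ is the additive subgroup (equivalently $K$-submodule) generated by all commutators, and $A[A,A]A$ is the additive subgroup generated by all elements $azb$ with $a,b\in A$, $z\in[A,A]$. *)

(* Defs.v *)
From mathcomp Require Import all_boot all_order all_algebra.
Set Implicit Arguments. Unset Strict Implicit. Unset Printing Implicit Defensive.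
Import GRing.Theory.
Local Open Scope ring_scope.

Definition commr_op (R : pzRingType) (x y : R) : R := x * y - y * x.

Inductive add_subgroup_gen (V : zmodType) (S : V -> Prop) : V -> Prop :=
  | asg_gen x : S x -> add_subgroup_gen S x
  | asg_0 : add_subgroup_gen S 0
  | asg_sub x y : add_subgroup_gen S x -> add_subgroup_gen S y ->
                  add_subgroup_gen S (x - y).

Definition comm_span (R : pzRingType) (t : R) : Prop :=
  add_subgroup_gen (fun z => exists x y : R, z = commr_op x y) t.

Definition comm_sandwich (R : pzRingType) (t : R) : Prop :=
  exists a z b : R, comm_span z /\ t = a * z * b.

Definition comm_ideal (R : pzRingType) (t : R) : Prop :=
  add_subgroup_gen (@comm_sandwich R) t.

(* The (not necessarily unital) K-subalgebra generated by a predicate S: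
   smallest subset containing S, 0, closed under +, K-scaling and product. *)
Inductive subalg_gen (K : pzRingType) (A : lalgType K) (S : A -> Prop) : A -> Prop :=
  | sag_gen x : S x -> subalg_gen S x
  | sag_0 : subalg_gen S 0
  | sag_add x y : subalg_gen S x -> subalg_gen S y -> subalg_gen S (x + y)
  | sag_scale (k : K) x : subalg_gen S x -> subalg_gen S (k *: x)
  | sag_mul x y : subalg_gen S x -> subalg_gen S y -> subalg_gen S (x * y).

(* Main.v *)
Require Import Defs.
From mathcomp Require Import all_boot all_order all_algebra.
Set Implicit Arguments. Unset Strict Implicit. Unset Printing Implicit Defensive.
Import GRing.Theory.
Local Open Scope ring_scope.

Inductive aexp := AVar of nat | AAdd of aexp & aexp | AOpp of aexp | AZero.
Fixpoint aeval (V : zmodType) (l : seq V) e : V := match e with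
  | AVar n => nth 0 l n | AAdd a b => aeval l a + aeval l b
  | AOpp a => - aeval l a | AZero => 0 end.
Fixpoint addl (c d : seq int) : seq int := match c, d with
  | [::], _ => d | _, [::] => c | a :: c', b :: d' => (a + b) :: addl c' d' end.
Definition oppl (c : seq int) := map (fun a => - a) c.
Fixpoint single n : seq int := if n is n'.+1 then 0 :: single n' else [:: 1].
Fixpoint anorm e := match e with
  | AVar n => single n | AAdd a b => addl (anorm a) (anorm b)
  | AOpp a => oppl (anorm a) | AZero => [::] end.
Fixpoint lin (V : zmodType) (c : seq int) (l : seq V) : V := match c with
  | [::] => 0 | a :: c' => (head 0 l) *~ a + lin c' (behead l) end.
Lemma lin_addl (V : zmodType) c d (l : seq V) : lin (addl c d) l = lin c l + lin d l.
Proof.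
elim: c d l => [|a c IH] [|b d] l /=; rewrite ?add0r ?addr0 //.
by rewrite IH mulrzDr addrACA.
Qed.
Lemma lin_oppl (V : zmodType) c (l : seq V) : lin (oppl c) l = - lin c l.
Proof. elim: c l => [|a c IH] l /=; rewrite ?oppr0 // IH mulrNz opprD. by []. Qed.
Lemma lin_single (V : zmodType) n (l : seq V) : lin (single n) l = nth 0 l n.
Proof.
elim: n l => [|n IH] [|x l] /=; rewrite ?mulr0z ?mulr1z ?add0r ?addr0 ?IH //.
by case: n {IH}.
Qed.
Lemma aeval_lin (V : zmodType) (l : seq V) e : aeval l e = lin (anorm e) l.
Proof.
elim: e => [n|a IHa b IHb|a IHa|] /=.
- by rewrite lin_single.
- by rewrite lin_addl IHa IHb.
- by rewrite lin_oppl IHa.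
- by [].
Qed.
Lemma lin_zero (V : zmodType) c (l : seq V) : all (fun a => a == 0) c -> lin c l = 0.
Proof. elim: c l => [|a c IH] l //= /andP[/eqP-> /IH->]. by rewrite mulr0z addr0. Qed.
Lemma aeval_eq (V : zmodType) (l : seq V) e1 e2 :
  all (fun a => a == 0) (addl (anorm e1) (oppl (anorm e2))) -> aeval l e1 = aeval l e2.
Proof.
move=> /(@lin_zero V _ l); rewrite lin_addl lin_oppl -!aeval_lin => /eqP.
by rewrite subr_eq0 => /eqP.
Qed.

Ltac index_of x l :=
  lazymatch l with
  | ?y :: ?l' => match constr:(tt) with
        | _ => let _ := constr:(@erefl _ x : x = y) in constr:(0%N)
        | _ => let n := index_of x l' in constr:(S n) end
  end.
Ltac add_atom t l :=
  let b := match constr:(tt) with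
           | _ => let _ := index_of t l in constr:(true)
           | _ => constr:(false) end in
  lazymatch b with true => l | false => constr:(t :: l) end.
Ltac collect t l :=
  lazymatch t with
  | (?a + ?b)%R => let l1 := collect a l in collect b l1
  | (- ?a)%R => collect a l
  | 0%R => l
  | _ => add_atom t l
  end.
Ltac reify t l :=
  lazymatch t with
  | (?a + ?b)%R => let ra := reify a l in let rb := reify b l in constr:(AAdd ra rb)
  | (- ?a)%R => let ra := reify a l in constr:(AOpp ra)
  | 0%R => constr:(AZero)
  | _ => let n := index_of t l in constr:(AVar n)
  end.
Ltac zmod_eq :=
  lazymatch goal with |- @eq ?V ?lhs ?rhs =>
    let l0 := collect lhs (@nil V) in let l := collect rhs l0 in
    let e1 := reify lhs l in let e2 := reify rhs l in
    change (aeval l e1 = aeval l e2); apply: aeval_eq; vm_compute; reflexivity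
  end.
Ltac expand := rewrite /commr_op;
  rewrite ?(mulrBl, mulrBr, mulrDl, mulrDr, mulNr, mulrN, opprK, mulrA, mul1r, mulr1).
Ltac ncring := expand; zmod_eq.

Lemma cm_anti (R : pzRingType) (x y : R) : commr_op x y = - commr_op y x.
Proof. ncring. Qed.
Lemma cm_mulr (R : pzRingType) (a b c : R) :
  commr_op a (b * c) = commr_op a b * c + b * commr_op a c.
Proof. ncring. Qed.
Lemma cm_mull (R : pzRingType) (a b c : R) :
  commr_op (a * b) c = commr_op a c * b + a * commr_op b c.
Proof. ncring. Qed.
Lemma cm_addr (R : pzRingType) (a b c : R) :
  commr_op a (b + c) = commr_op a b + commr_op a c.
Proof. ncring. Qed.
Lemma cm_oppr (R : pzRingType) (a b : R) : commr_op a (- b) = - commr_op a b.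
Proof. ncring. Qed.
Lemma cm_sq (R : pzRingType) (a b : R) : commr_op a b * commr_op a b =
  commr_op (commr_op a (a * b)) b - a * commr_op (commr_op a b) b.
Proof. ncring. Qed.
Lemma E0 (R : pzRingType) (p y q : R) : p * y * q = y * (q * p) + commr_op p (y * q).
Proof. ncring. Qed.
Lemma E1 (R : pzRingType) (y c x : R) :
  y * commr_op c x = - commr_op x (y * c) + commr_op x y * c.
Proof. ncring. Qed.
Lemma E2 (R : pzRingType) (q c x : R) :
  q * commr_op c x = commr_op c (q * x) - commr_op c q * x.
Proof. ncring. Qed.
Lemma E3 (R : pzRingType) (c x' x : R) :
  commr_op c x' * x = commr_op c (x' * x) + commr_op x (x' * c) - commr_op x x' * c.
Proof. ncring. Qed.
Lemma E4 (R : pzRingType) (t x g y : R) :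
  t * (x * g * y) = (y * t * x) * g + commr_op (t * x * g) y.
Proof. ncring. Qed.
Lemma key9 (R : pzRingType) (x a b c d : R) :
  x * commr_op (commr_op a b) (commr_op c d) =
  commr_op (x*d) c * commr_op a b + commr_op c x * commr_op a (d*b) +
  commr_op (a*c) x * commr_op b d + commr_op (c*x) a * commr_op b d +
  commr_op x c * commr_op (a*b) d + commr_op a (x*c) * commr_op b d +
  commr_op a x * commr_op (b*d) c + commr_op x a * commr_op b (c*d) +
  commr_op a (x*b) * commr_op c d.
Proof. ncring. Qed.

Lemma asg_opp (V : zmodType) (S : V -> Prop) x :
  add_subgroup_gen S x -> add_subgroup_gen S (- x).
Proof. move=> Hx; have := asg_sub (asg_0 S) Hx; by rewrite sub0r. Qed.
Lemma asg_add (V : zmodType) (S : V -> Prop) x y :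
  add_subgroup_gen S x -> add_subgroup_gen S y -> add_subgroup_gen S (x + y).
Proof. move=> Hx /asg_opp Hy; have := asg_sub Hx Hy; by rewrite opprK. Qed.

Definition is_ideal (R : pzRingType) (M : R -> Prop) :=
  [/\ M 0, (forall x y, M x -> M y -> M (x - y)),
      (forall a x, M x -> M (a * x)) & (forall a x, M x -> M (x * a))].

Lemma idealN (R : pzRingType) (M : R -> Prop) x : is_ideal M -> M x -> M (- x).
Proof. case=> H0 HB _ _ Hx; have := HB _ _ H0 Hx; by rewrite sub0r. Qed.
Lemma idealD (R : pzRingType) (M : R -> Prop) x y :
  is_ideal M -> M x -> M y -> M (x + y).
Proof.
move=> HM Hx /(idealN HM) Hy; case: HM => _ HB _ _; have := HB _ _ Hx Hy.
by rewrite opprK.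
Qed.
Lemma idealB (R : pzRingType) (M : R -> Prop) x y :
  is_ideal M -> M x -> M y -> M (x - y).
Proof. by case=> _ HB _ _; apply: HB. Qed.
Lemma idealL (R : pzRingType) (M : R -> Prop) a x : is_ideal M -> M x -> M (a * x).
Proof. by case=> _ _ HL _; apply: HL. Qed.
Lemma idealR (R : pzRingType) (M : R -> Prop) a x : is_ideal M -> M x -> M (x * a).
Proof. by case=> _ _ _ HR; apply: HR. Qed.
Lemma ideal0 (R : pzRingType) (M : R -> Prop) : is_ideal M -> M 0.
Proof. by case. Qed.

Definition gI (R : pzRingType) (G : R -> Prop) :=
  add_subgroup_gen (fun s => exists x g y, G g /\ s = x * g * y).

Lemma gI_ideal (R : pzRingType) (G : R -> Prop) : is_ideal (gI G).
Proof.
split.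
- exact: asg_0.
- by move=> x y; apply: asg_sub.
- move=> a x; elim=> [s [p [g [q [Gg ->]]]]| |u v _ IHu _ IHv].
  + by apply: asg_gen; exists (a * p), g, q; split=> //; rewrite !mulrA.
  + by rewrite mulr0; apply: asg_0.
  + by rewrite mulrBr; apply: asg_sub.
- move=> a x; elim=> [s [p [g [q [Gg ->]]]]| |u v _ IHu _ IHv].
  + by apply: asg_gen; exists p, g, (q * a); split=> //; rewrite !mulrA.
  + by rewrite mul0r; apply: asg_0.
  + by rewrite mulrBl; apply: asg_sub.
Qed.

Lemma gI_gen (R : pzRingType) (G : R -> Prop) g x y : G g -> gI G (x * g * y).
Proof. by move=> Gg; apply: asg_gen; exists x, g, y. Qed.
Lemma gI_gen1 (R : pzRingType) (G : R -> Prop) g : G g -> gI G g.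
Proof. by move=> Gg; have := gI_gen 1 1 Gg; rewrite mul1r mulr1. Qed.
Lemma gI_min (R : pzRingType) (G M : R -> Prop) :
  is_ideal M -> (forall g, G g -> M g) -> forall t, gI G t -> M t.
Proof.
move=> HM HG t Ht; elim: Ht => [s [p [g [q [Gg ->]]]]| |u v _ IHu _ IHv].
- by apply: (idealR _ HM); apply: (idealL _ HM); apply: HG.
- exact: (ideal0 HM).
- exact: (idealB HM).
Qed.

Lemma is_ideal_sum (R : pzRingType) (M N : R -> Prop) :
  is_ideal M -> is_ideal N -> is_ideal (fun s => exists m w, M m /\ N w /\ s = m + w).
Proof.
move=> HM HN; split.
- by exists 0, 0; rewrite addr0; split; [apply: ideal0|split; [apply: ideal0|]].
- move=> x y [m [w [Hm [Hw ->]]]] [m' [w' [Hm' [Hw' ->]]]].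
  exists (m - m'), (w - w'); split; first exact: idealB.
  by split; [exact: idealB|]; rewrite opprD addrACA.
- move=> a x [m [w [Hm [Hw ->]]]]; exists (a * m), (a * w).
  by split; [exact: idealL|split; [exact: idealL|rewrite mulrDr]].
- move=> a x [m [w [Hm [Hw ->]]]]; exists (m * a), (w * a).
  by split; [exact: idealR|split; [exact: idealR|rewrite mulrDl]].
Qed.

Definition Gc (R : pzRingType) (g : R) := exists a b, g = commr_op a b.
Definition Gd (R : pzRingType) (g : R) := exists a b x, g = commr_op (commr_op a b) x.
Definition Gj (R : pzRingType) (g : R) :=
  exists a b c d, g = commr_op (commr_op a b) (commr_op c d).

Lemma comm_ideal_Gc (R : pzRingType) (t : R) : comm_ideal t -> gI (@Gc R) t.
Proof.
move=> Ht; elim: Ht => [s [a [z [b [Hz ->]]]] | | u v _ IHu _ IHv].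
- elim: Hz => [w [x [y ->]] | | z1 z2 _ IH1 _ IH2].
  + by apply: gI_gen; exists x, y.
  + by rewrite mulr0 mul0r; apply: asg_0.
  + by rewrite mulrBr mulrBl; apply: asg_sub.
- exact: asg_0.
- exact: asg_sub.
Qed.

(* Step A : 1 lies in the ideal generated by the [[a,b],x] *)
Lemma Ld (R : pzRingType) (a b x : R) : gI (@Gd R) (commr_op (commr_op a b) x).
Proof. by apply: gI_gen1; exists a, b, x. Qed.

Lemma Lsq (R : pzRingType) (a b : R) : gI (@Gd R) (commr_op a b * commr_op a b).
Proof.
have HL := gI_ideal (@Gd R).
rewrite cm_sq; apply: (idealB HL); first exact: Ld.
by apply: (idealL _ HL); apply: Ld.
Qed.

Lemma kill_aux (R : pzRingType) (a b u : R) :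
  gI (fun g => g = commr_op a b) u ->
  exists v, gI (@Gd R) (u - commr_op a b * v).
Proof.
have HL := gI_ideal (@Gd R).
move=> Hu; elim: Hu => [s [x [g [y [-> ->]]]] | | u1 u2 _ [v1 H1] _ [v2 H2]].
- exists (x * y).
  have -> : x * commr_op a b * y - commr_op a b * (x * y) =
            - (commr_op (commr_op a b) x * y) by ncring.
  by apply: (idealN HL); apply: (idealR _ HL); apply: Ld.
- by exists 0; rewrite mulr0 subr0; apply: (ideal0 HL).
- exists (v1 - v2).
  have -> : u1 - u2 - commr_op a b * (v1 - v2) =
            (u1 - commr_op a b * v1) - (u2 - commr_op a b * v2) by ncring.
  exact: (idealB HL).
Qed.

Lemma kill (R : pzRingType) (M : R -> Prop) (a b u : R) :
  is_ideal M -> (forall s, gI (@Gd R) s -> M s) ->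
  gI (fun g => g = commr_op a b) u -> M (1 - u) -> M 1.
Proof.
have HL := gI_ideal (@Gd R).
move=> HM HLM /kill_aux [v Hv] H1u.
have H1 : M (1 - commr_op a b * v).
  have -> : 1 - commr_op a b * v = (1 - u) + (u - commr_op a b * v) by ncring.
  by apply: (idealD HM) => //; apply: HLM.
have -> : (1 : R) = (1 - commr_op a b * v) * (1 + commr_op a b * v)
   + commr_op a b * commr_op a b * (v * v)
   + commr_op a b * - commr_op (commr_op a b) v * v by ncring.
apply: (idealD HM); first apply: (idealD HM).
- exact: (idealR _ HM).
- by apply: HLM; apply: (idealR _ HL); apply: Lsq.
- apply: HLM; apply: (idealR _ HL); apply: (idealL _ HL); apply: (idealN HL).
  exact: Ld.
Qed.

Lemma gI_single_sub (R : pzRingType) (t g0 x y : R) :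
  gI (fun g => g = x * g0 * y) t -> gI (fun g => g = g0) t.
Proof.
apply: gI_min; first exact: gI_ideal.
by move=> g ->; apply: gI_gen.
Qed.

Lemma gI_zero (R : pzRingType) (t : R) : gI (fun g => g = 0) t -> t = 0.
Proof.
have H : is_ideal (fun s : R => s = 0).
  split=> //; [by move=> x y -> ->; rewrite subr0
              | by move=> a x ->; rewrite mulr0 | by move=> a x ->; rewrite mul0r].
by apply: (gI_min H) => g.
Qed.

Lemma gI_diff (R : pzRingType) (t1 t2 u : R) : gI (fun g => g = t1 - t2) u ->
  exists u1 u2, gI (fun g => g = t1) u1 /\ gI (fun g => g = t2) u2 /\ u = u1 - u2.
Proof.
set M := fun s => exists u1 u2, gI (fun g => g = t1) u1 /\ gI (fun g => g = t2) u2 /\ s = u1 - u2.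
have H1 := gI_ideal (fun g => g = t1); have H2 := gI_ideal (fun g => g = t2).
have HM : is_ideal M.
  split.
  - by exists 0, 0; rewrite subr0; split; [exact: ideal0|split; [exact: ideal0|]].
  - move=> x y [a [b [Ha [Hb ->]]]] [c [d [Hc [Hd ->]]]].
    exists (a - c), (b - d); split; first exact: idealB.
    by split; [exact: idealB|]; ncring.
  - move=> z x [a [b [Ha [Hb ->]]]]; exists (z * a), (z * b).
    by split; [exact: idealL|split; [exact: idealL|rewrite mulrBr]].
  - move=> z x [a [b [Ha [Hb ->]]]]; exists (a * z), (b * z).
    by split; [exact: idealR|split; [exact: idealR|rewrite mulrBl]].
apply: (gI_min HM) => g ->; exists t1, t2.
by split; [apply: gI_gen1|split; [apply: gI_gen1|]].
Qed.

Lemma Rlem (R : pzRingType) (t : R) : gI (@Gc R) t ->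
  forall M : R -> Prop, is_ideal M -> (forall s, gI (@Gd R) s -> M s) ->
  forall u, gI (fun g => g = t) u -> M (1 - u) -> M 1.
Proof.
move=> Ht; elim: Ht => [s [x [g [y [[a [b ->]] ->]]]] | | t1 t2 _ IH1 _ IH2]
  M HM HLM u Hu H1u.
- apply: (kill HM HLM _ H1u); exact: gI_single_sub Hu.
- by move: H1u; rewrite (gI_zero Hu) subr0.
- have [u1 [u2 [Hu1 [Hu2 Eu]]]] := gI_diff Hu.
  set M' := fun s => exists m w, M m /\ gI (fun g => g = t2) w /\ s = m + w.
  have HM' : is_ideal M' := is_ideal_sum HM (gI_ideal _).
  have HLM' : forall s, gI (@Gd R) s -> M' s.
    move=> s Hs; exists s, 0; split; first exact: HLM.
    by split; [exact: (ideal0 (gI_ideal _))|rewrite addr0].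
  have : M' (1 - u1).
    exists (1 - u), (- u2); split=> //; split; first exact: (idealN (gI_ideal _)).
    by rewrite Eu; ncring.
  move=> /(IH1 M' HM' HLM' u1 Hu1) [m [w [Hm [Hw Ew]]]].
  apply: (IH2 M HM HLM w Hw).
  have -> : 1 - w = m by rewrite Ew; ncring.
  exact: Hm.
Qed.

Lemma L1 (R : pzRingType) : gI (@Gc R) 1 -> gI (@Gd R) 1.
Proof.
move=> H; apply: (Rlem H (gI_ideal _)) => //.
- by apply: gI_gen1.
- by rewrite subrr; apply: (ideal0 (gI_ideal _)).
Qed.

(* Step B : 1 lies in the ideal generated by the [[a,b],[c,d]] *)
Lemma Jg (R : pzRingType) (a b c d : R) :
  gI (@Gj R) (commr_op (commr_op a b) (commr_op c d)).
Proof. by apply: gI_gen1; exists a, b, c, d. Qed.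

Lemma E5 (R : pzRingType) (c c' x' x : R) :
  commr_op c (commr_op c' x' * x) =
  (commr_op c (commr_op c' (x' * x)) + commr_op c (commr_op x (x' * c'))) -
  (commr_op c (commr_op x x') * c' + commr_op x x' * commr_op c c').
Proof. ncring. Qed.
Lemma E6 (R : pzRingType) (d y c' x' : R) :
  commr_op d (y * commr_op c' x') =
  - commr_op d (commr_op x' (y * c')) +
  (commr_op d (commr_op x' y) * c' + commr_op x' y * commr_op d c').
Proof. ncring. Qed.

Lemma DBD (R : pzRingType) (a b x a' b' x' y : R) :
  gI (@Gj R) (commr_op (commr_op a b) x * y * commr_op (commr_op a' b') x').
Proof.
have HJ := gI_ideal (@Gj R).
rewrite E0; apply: (idealD HJ).
- apply: (idealL _ HJ).
  rewrite (E2 (commr_op (commr_op a' b') x') (commr_op a b) x).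
  apply: (idealB HJ); last by apply: (idealR _ HJ); apply: Jg.
  rewrite (E5 (commr_op a b) (commr_op a' b') x' x).
  apply: (idealB HJ); first by apply: (idealD HJ); apply: Jg.
  by apply: (idealD HJ); [apply: (idealR _ HJ)|apply: (idealL _ HJ)]; apply: Jg.
- rewrite (E6 (commr_op (commr_op a b) x) y (commr_op a' b') x').
  apply: (idealD HJ); first by apply: (idealN HJ); apply: Jg.
  by apply: (idealD HJ); [apply: (idealR _ HJ)|apply: (idealL _ HJ)]; apply: Jg.
Qed.

Lemma LL_J (R : pzRingType) (l1 l2 : R) :
  gI (@Gd R) l1 -> gI (@Gd R) l2 -> gI (@Gj R) (l1 * l2).
Proof.
have HJ := gI_ideal (@Gj R).
move=> H1; elim: H1 l2 => [s [p [g [q [[a [b [x ->]]] ->]]]] | | u v _ IHu _ IHv] l2 H2.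
- elim: H2 => [s' [p' [g' [q' [[a' [b' [x' ->]]] ->]]]] | | u' v' _ IHu' _ IHv'].
  + have -> : p * commr_op (commr_op a b) x * q * (p' * commr_op (commr_op a' b') x' * q')
      = p * (commr_op (commr_op a b) x * (q * p') * commr_op (commr_op a' b') x') * q'
      by rewrite !mulrA.
    by apply: (idealR _ HJ); apply: (idealL _ HJ); apply: DBD.
  + by rewrite mulr0; apply: (ideal0 HJ).
  + by rewrite mulrBr; apply: (idealB HJ).
- by rewrite mul0r; apply: (ideal0 HJ).
- by rewrite mulrBl; apply: (idealB HJ); [apply: IHu|apply: IHv].
Qed.

Definition Sb (R : pzRingType) (n : nat) (t : R) :=
  exists b c d e : 'I_n -> R,
    t = \sum_(j < n) commr_op (b j) (c j) * commr_op (d j) (e j).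

Lemma Sb0 (R : pzRingType) : Sb 0 (0 : R).
Proof. by exists (fun _ => 0), (fun _ => 0), (fun _ => 0), (fun _ => 0); rewrite big_ord0. Qed.

Lemma Sb1 (R : pzRingType) (p q r s : R) : Sb 1 (commr_op p q * commr_op r s).
Proof. by exists (fun _ => p), (fun _ => q), (fun _ => r), (fun _ => s); rewrite big_ord1. Qed.

Lemma SbD (R : pzRingType) n m (t s : R) : Sb n t -> Sb m s -> Sb (n + m) (t + s).
Proof.
move=> [b [c [d [e ->]]]] [b' [c' [d' [e' ->]]]].
pose f (F : 'I_n -> R) (G : 'I_m -> R) (i : 'I_(n + m)) :=
  match split i with inl j => F j | inr k => G k end.
exists (f b b'), (f c c'), (f d d'), (f e e').
rewrite big_split_ord /=.
have Hl : forall i : 'I_n, split (lshift m i) = inl i := fun i => unsplitK (inl _ i).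
have Hr : forall i : 'I_m, split (rshift n i) = inr i := fun i => unsplitK (inr _ i).
by congr (_ + _); apply: eq_bigr => i _; rewrite /f ?Hl ?Hr.
Qed.

Lemma SbN (R : pzRingType) n (t : R) : Sb n t -> Sb n (- t).
Proof.
move=> [b [c [d [e ->]]]]; exists c, b, d, e.
rewrite -sumrN; apply: eq_bigr => i _.
by rewrite (cm_anti (c i)) mulNr.
Qed.

Lemma Sbcm (R : pzRingType) n (t y : R) : Sb n t -> Sb (n + n) (commr_op t y).
Proof.
move=> [b [c [d [e ->]]]].
have -> : commr_op (\sum_(j < n) commr_op (b j) (c j) * commr_op (d j) (e j)) y =
   \sum_(j < n) commr_op (commr_op (b j) (c j)) y * commr_op (d j) (e j) +
   \sum_(j < n) commr_op (b j) (c j) * commr_op (commr_op (d j) (e j)) y.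
  rewrite -big_split /= {1}/commr_op mulr_suml mulr_sumr -sumrB.
  by apply: eq_bigr => i _; ncring.
apply: SbD.
- by exists (fun j => commr_op (b j) (c j)), (fun _ => y), d, e.
- by exists b, c, (fun j => commr_op (d j) (e j)), (fun _ => y).
Qed.

Lemma Sb9 (R : pzRingType) (x a b c d : R) :
  Sb 9 (x * commr_op (commr_op a b) (commr_op c d)).
Proof.
rewrite key9.
exact: (SbD (SbD (SbD (SbD (SbD (SbD (SbD (SbD (Sb1 _ _ _ _) (Sb1 _ _ _ _))
  (Sb1 _ _ _ _)) (Sb1 _ _ _ _)) (Sb1 _ _ _ _)) (Sb1 _ _ _ _)) (Sb1 _ _ _ _))
  (Sb1 _ _ _ _)) (Sb1 _ _ _ _)).
Qed.

Lemma JSb (R : pzRingType) (g : R) : gI (@Gj R) g -> exists n, forall t, Sb n (t * g).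
Proof.
move=> Hg; elim: Hg => [s [x [g' [y [[a [b [c [d ->]]]] ->]]]] | | u v _ [n Hn] _ [m Hm]].
- exists (9 + (9 + 9))%N => t.
  rewrite E4; apply: SbD; first exact: Sb9.
  by apply: Sbcm; apply: Sb9.
- by exists 0%N => t; rewrite mulr0; apply: Sb0.
- exists (n + m)%N => t; rewrite mulrBr; apply: SbD (Hn t) (SbN (Hm t)).
Qed.

Lemma one_three (R : pzRingType) : (forall a : R, comm_ideal a) ->
  exists N : nat, forall a : R, Sb N a.
Proof.
move=> H.
have J1 : gI (@Gj R) 1.
  by rewrite -(mulr1 1); apply: LL_J; apply: L1; apply: comm_ideal_Gc.
have [n Hn] := JSb J1; exists n => a; have := Hn a; by rewrite mulr1.
Qed.

Theorem theorem3p4 (K : comPzRingType) (A : algType K) :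
  [<-> (forall a : A, comm_ideal a);
       (forall a : A, subalg_gen (fun z : A => exists x y : A, z = commr_op x y) a);
       (exists N : nat, forall a : A, exists b c d e : 'I_N -> A,
          a = \sum_(j < N) commr_op (b j) (c j) * commr_op (d j) (e j))].
Proof.
have T3 : (exists N : nat, forall a : A, exists b c d e : 'I_N -> A,
          a = \sum_(j < N) commr_op (b j) (c j) * commr_op (d j) (e j)) ->
          forall a : A, subalg_gen (fun z : A => exists x y : A, z = commr_op x y) a.
  move=> [N HN] a; have [b [c [d [e ->]]]] := HN a.
  apply: (big_ind (subalg_gen _)); [exact: sag_0|by move=> x y; apply: sag_add|].
  by move=> i _; apply: sag_mul; apply: sag_gen; [exists (b i), (c i)|exists (d i), (e i)].
have CI_mulr : forall x y : A, comm_ideal x -> comm_ideal (x * y).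
  move=> x y Hx; elim: Hx => [s [a [z [b [Hz ->]]]] | | u v _ IHu _ IHv].
  - by apply: asg_gen; exists a, z, (b * y); split=> //; rewrite !mulrA.
  - by rewrite mul0r; apply: asg_0.
  - by rewrite mulrBl; apply: asg_sub.
have CI_scale : forall (k : K) (x : A), comm_ideal x -> comm_ideal (k *: x).
  move=> k x Hx; elim: Hx => [s [a [z [b [Hz ->]]]] | | u v _ IHu _ IHv].
  - by apply: asg_gen; exists (k *: a), z, b; split=> //; rewrite !scalerAl.
  - by rewrite scaler0; apply: asg_0.
  - by rewrite scalerBr; apply: asg_sub.
have T21 : (forall a : A, subalg_gen (fun z : A => exists x y : A, z = commr_op x y) a) ->
           forall a : A, comm_ideal a.
  move=> H a; elim: (H a) => [z [x [y ->]] | | u v _ IHu _ IHv | k u _ IHu | u v _ IHu _ IHv].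
  - apply: asg_gen; exists 1, (commr_op x y), 1; split; last by rewrite mul1r mulr1.
    by apply: asg_gen; exists x, y.
  - exact: asg_0.
  - exact: asg_add.
  - exact: CI_scale.
  - exact: CI_mulr.
have T13 := @one_three A.
tfae.
- by move=> H1; apply: T3; apply: T13.
- by move=> H2; apply: T13; apply: T21.
- move=> [N HN] a; have [b [c [d [e ->]]]] := HN a.
  elim/big_ind: _; [exact: asg_0|by move=> x y; apply: asg_add|].
  move=> i _; apply: asg_gen; exists 1, (commr_op (b i) (c i)), (commr_op (d i) (e i)).
  by split; [apply: asg_gen; exists (b i), (c i)|rewrite mul1r].
Qed.
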